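(* Let $E$ be an arbitrary directed graph and $K$ a field with involution. The Leavitt path algebra $L_K(E)$ is positive definite if and only if $K$ is positive definite.
   Context: A directed graph $E=(E^0,E^1,s,r)$ has vertex set $E^0$, edge set $E^1$ (arbitrary cardinalities) and source/range maps $s,r:E^1\to E^0$. A vertex $v$ is regular if $s^{-1}(v)$ is nonempty and finite. For a field $K$, $L_K(E)$ is the free $K$-algebra on $E^0\cup E^1\cup\{e^*: e\in E^1\}$ modulo: $vw=\delta_{v,w}v$ for $v,w\in E^0$; $s(e)e=er(e)=e$; $r(e)e^*=e^*s(e)=e^*$; $e^*f=\delta_{e,f}r(e)$ for $e,f\in E^1$; $v=\sum_{e\in s^{-1}(v)}ee^*$ for every regular vertex $v$. If $K$ has an involution $k\mapsto k^*$ (e.g. the identity), $L_K(E)$ is a $*$-algebra via $(\sum k_ia_ib_i^* )^*=\sum k_i^*b_ia_i^*$ for paths $a_i,b_i$ (with $(e_1\cdots e_n)^*=e_n^*\cdots e_1^*$, $v^*=v$). A $*$-ring (or $*$-field) is positive definite if for all $n$ and $x_1,\dots,x_n$, $\sum_{i=1}^n x_ix_i^*=0$ implies $x_i=0$ for all $i$. *)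

(* Defs.v *)
From HB Require Import structures.
From mathcomp Require Import all_boot all_order all_algebra.
From Stdlib Require List.
Set Implicit Arguments. Unset Strict Implicit. Unset Printing Implicit Defensive.
Import GRing.Theory.
Local Open Scope ring_scope.

Definition is_involution (K : fieldType) (cj : {rmorphism K -> K}) : Prop :=
  forall k : K, cj (cj k) = k.

Definition field_pos_def (K : fieldType) (cj : K -> K) : Prop :=
  forall ks : seq K, \sum_(k <- ks) k * cj k = 0 -> forall k, k \in ks -> k = 0.

(* Generators of the free algebra: vertices, real edges, ghost edges e^*. *)
Inductive gen (V Ed : Type) : Type :=
| GV of V
| GE of Ed
| GS of Ed.

(* Syntax of the free (non-unital, associative) K-algebra on a set G of
   generators. *)
Inductive fterm (K G : Type) : Type :=
| TGen of G
| TZero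
| TAdd of fterm K G & fterm K G
| TScale of K & fterm K G
| TMul of fterm K G & fterm K G.

Arguments TZero {K G}.

Fixpoint tsum (K G : Type) (l : list (fterm K G)) : fterm K G :=
  match l with
  | nil => TZero
  | cons t l' => TAdd t (tsum l')
  end.

Section LPA.
Variables (K : fieldType) (V Ed : Type) (s r : Ed -> V).

Notation T := (fterm K (gen V Ed)).
Notation v_ v := (@TGen K (gen V Ed) (GV Ed v)).
Notation e_ e := (@TGen K (gen V Ed) (GE V e)).
Notation es_ e := (@TGen K (gen V Ed) (GS V e)).

Inductive leavitt_rel : T -> T -> Prop :=
| LR_vv v : leavitt_rel (TMul (v_ v) (v_ v)) (v_ v)
| LR_vw v w : v <> w -> leavitt_rel (TMul (v_ v) (v_ w)) TZero
| LR_se e : leavitt_rel (TMul (v_ (s e)) (e_ e)) (e_ e)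
| LR_er e : leavitt_rel (TMul (e_ e) (v_ (r e))) (e_ e)
| LR_re e : leavitt_rel (TMul (v_ (r e)) (es_ e)) (es_ e)
| LR_es e : leavitt_rel (TMul (es_ e) (v_ (s e))) (es_ e)
| LR_CK1 e : leavitt_rel (TMul (es_ e) (e_ e)) (v_ (r e))
| LR_CK1' e f : e <> f -> leavitt_rel (TMul (es_ e) (e_ f)) TZero
(* CK2 at a regular vertex v: l enumerates s^{-1}(v) without repetition,
   and is nonempty. *)
| LR_CK2 v (l : list Ed) :
    l <> nil -> List.NoDup l -> (forall e, s e = v <-> List.In e l) ->
    leavitt_rel (v_ v) (tsum (List.map (fun e => TMul (e_ e) (es_ e)) l)).

(* Equality in L_K(E): the congruence generated by the axioms of an
   associative K-algebra together with the Leavitt relations. *)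
Inductive lpa_eq : T -> T -> Prop :=
| Q_rel a b : leavitt_rel a b -> lpa_eq a b
| Q_refl a : lpa_eq a a
| Q_sym a b : lpa_eq a b -> lpa_eq b a
| Q_trans a b c : lpa_eq a b -> lpa_eq b c -> lpa_eq a c
| Q_add a a' b b' : lpa_eq a a' -> lpa_eq b b' -> lpa_eq (TAdd a b) (TAdd a' b')
| Q_scale k a a' : lpa_eq a a' -> lpa_eq (TScale k a) (TScale k a')
| Q_mul a a' b b' : lpa_eq a a' -> lpa_eq b b' -> lpa_eq (TMul a b) (TMul a' b')
| Q_addA a b c : lpa_eq (TAdd a (TAdd b c)) (TAdd (TAdd a b) c)
| Q_addC a b : lpa_eq (TAdd a b) (TAdd b a)
| Q_add0 a : lpa_eq (TAdd TZero a) a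
| Q_addN a : lpa_eq (TAdd a (TScale (-1) a)) TZero
| Q_scaleDr k a b : lpa_eq (TScale k (TAdd a b)) (TAdd (TScale k a) (TScale k b))
| Q_scaleDl k l a : lpa_eq (TScale (k + l) a) (TAdd (TScale k a) (TScale l a))
| Q_scaleA k l a : lpa_eq (TScale (k * l) a) (TScale k (TScale l a))
| Q_scale1 a : lpa_eq (TScale 1 a) a
| Q_mulA a b c : lpa_eq (TMul a (TMul b c)) (TMul (TMul a b) c)
| Q_mulDl a b c : lpa_eq (TMul (TAdd a b) c) (TAdd (TMul a c) (TMul b c))
| Q_mulDr a b c : lpa_eq (TMul a (TAdd b c)) (TAdd (TMul a b) (TMul a c))
| Q_scalel k a b : lpa_eq (TMul (TScale k a) b) (TScale k (TMul a b))
| Q_scaler k a b : lpa_eq (TMul a (TScale k b)) (TScale k (TMul a b)).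

Fixpoint tstar (cj : K -> K) (t : T) : T :=
  match t with
  | TGen (GV v) => v_ v
  | TGen (GE e) => es_ e
  | TGen (GS e) => e_ e
  | TZero => TZero
  | TAdd a b => TAdd (tstar cj a) (tstar cj b)
  | TScale k a => TScale (cj k) (tstar cj a)
  | TMul a b => TMul (tstar cj b) (tstar cj a)
  end.

Definition lpa_pos_def (cj : K -> K) : Prop :=
  forall xs : list T,
    lpa_eq (tsum (List.map (fun x => TMul x (tstar cj x)) xs)) TZero ->
    forall x, List.In x xs -> lpa_eq x TZero.

End LPA.

(* Main.v *)
Require Import Defs.
From HB Require Import structures.
From mathcomp Require Import all_boot all_order all_algebra.
From mathcomp Require Import ring zify.
From Stdlib Require Import ClassicalEpsilon FunctionalExtensionality ProofIrrelevance Setoid Morphisms.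
Set Implicit Arguments. Unset Strict Implicit. Unset Printing Implicit Defensive.
Import GRing.Theory.
Local Open Scope ring_scope.

Section Main.
Variables (K : fieldType) (V Ed : Type) (s r : Ed -> V).
Notation T := (fterm K (gen V Ed)).
Notation v_ v := (@TGen K (gen V Ed) (GV Ed v)).
Notation e_ e := (@TGen K (gen V Ed) (GE V e)).
Notation es_ e := (@TGen K (gen V Ed) (GS V e)).
Notation "a === b" := (lpa_eq s r a b) (at level 70).

Lemma lmap_map (A B : Type) (f : A -> B) (l : seq A) : List.map f l = map f l.
Proof. by elim: l => //= a l ->. Qed.

Add Parametric Relation : T (lpa_eq s r)
  reflexivity proved by (@Q_refl K V Ed s r)
  symmetry proved by (@Q_sym K V Ed s r)
  transitivity proved by (@Q_trans K V Ed s r) as lpa_rel.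

Add Parametric Morphism : (@TAdd K (gen V Ed)) with signature
  lpa_eq s r ==> lpa_eq s r ==> lpa_eq s r as add_mor.
Proof. by move=> *; apply: Q_add. Qed.
Add Parametric Morphism : (@TMul K (gen V Ed)) with signature
  lpa_eq s r ==> lpa_eq s r ==> lpa_eq s r as mul_mor.
Proof. by move=> *; apply: Q_mul. Qed.
Add Parametric Morphism k : (@TScale K (gen V Ed) k) with signature
  lpa_eq s r ==> lpa_eq s r as scale_mor.
Proof. by move=> *; apply: Q_scale. Qed.

Local Hint Extern 0 (lpa_eq _ _ _ _) => apply: Q_refl : core.

Lemma scale0 (a : T) : TScale 0 a === TZero.
Proof.
have E : (0:K) = 1 + (-1) by rewrite subrr.
by rewrite E Q_scaleDl Q_scale1 Q_addN.
Qed.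

Lemma taddr0 (a : T) : TAdd a TZero === a.
Proof. by rewrite Q_addC Q_add0. Qed.

Lemma tmul0l (a : T) : TMul TZero a === TZero.
Proof. by rewrite -{1}(scale0 TZero) Q_scalel scale0. Qed.
Lemma tmul0r (a : T) : TMul a TZero === TZero.
Proof. by rewrite -{1}(scale0 TZero) Q_scaler scale0. Qed.
Lemma scaleZ k : TScale k (@TZero K (gen V Ed)) === TZero.
Proof. by rewrite -{1}(scale0 TZero) -Q_scaleA mulr0 scale0. Qed.

Lemma tsum_cat (l1 l2 : seq T) : tsum (l1 ++ l2) === TAdd (tsum l1) (tsum l2).
Proof.
elim: l1 => [|a l IH] /=; first by rewrite Q_add0.
by rewrite IH Q_addA.
Qed.

Lemma tsum_mull (l : seq T) b : TMul (tsum l) b === tsum (map (fun t => TMul t b) l).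
Proof. elim: l => [|a l IH] /=; first exact: tmul0l. by rewrite Q_mulDl IH. Qed.
Lemma tsum_mulr (l : seq T) b : TMul b (tsum l) === tsum (map (fun t => TMul b t) l).
Proof. elim: l => [|a l IH] /=; first exact: tmul0r. by rewrite Q_mulDr IH. Qed.
Lemma tsum_scale (l : seq T) k : TScale k (tsum l) === tsum (map (TScale k) l).
Proof. elim: l => [|a l IH] /=; first exact: scaleZ. by rewrite Q_scaleDr IH. Qed.


Definition dec (P : Prop) : bool := if excluded_middle_informative P then true else false.
Lemma decP (P : Prop) : reflect P (dec P).
Proof. by rewrite /dec; case: excluded_middle_informative => H; constructor. Qed.
Definition ind (P : Prop) : K := if dec P then 1 else 0.
Lemma ind_T (P : Prop) : P -> ind P = 1.
Proof. by move=> H; rewrite /ind; case: decP. Qed.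
Lemma ind_F (P : Prop) : ~ P -> ind P = 0.
Proof. by move=> H; rewrite /ind; case: decP. Qed.
Lemma ind_and (P Q : Prop) : ind (P /\ Q) = ind P * ind Q.
Proof.
rewrite /ind; case: (decP (P /\ Q)) => H; case: (decP P) => HP; case: (decP Q) => HQ;
  rewrite ?mulr1 ?mulr0 ?mul0r //; exfalso; tauto.
Qed.
Lemma ind_idem (P : Prop) : ind P * ind P = ind P.
Proof. by rewrite /ind; case: decP; rewrite ?mulr1 ?mulr0. Qed.
Lemma ind_iff (P Q : Prop) : (P <-> Q) -> ind P = ind Q.
Proof. move=> [H1 H2]; rewrite /ind; case: decP => HP; case: decP => // HQ; [case: HQ; exact: H1|case: HP; exact: H2]. Qed.

Definition Pok (u : nat -> V) (p : nat -> option Ed) := forall n,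
  match p n with Some e => s e = u n /\ r e = u n.+1 | None => forall e, s e <> u n end.
Record pt := Pt { pu : nat -> V; pp : nat -> option Ed; pz : int; pP : Pok pu pp }.

Lemma pt_eq (x y : pt) : pu x =1 pu y -> pp x =1 pp y -> pz x = pz y -> x = y.
Proof.
case: x => u p z P; case: y => u' p' z' P' /= Hu Hp Hz.
have E1 := functional_extensionality _ _ Hu; have E2 := functional_extensionality _ _ Hp.
subst. by rewrite (proof_irrelevance _ P P').
Qed.

Definition tail (x : pt) : pt :=
  @Pt (fun n => pu x n.+1) (fun n => pp x n.+1) (pz x - 1) (fun n => pP x n.+1).

Definition cons_u (w : V) (u : nat -> V) (n : nat) : V := if n is n'.+1 then u n' else w.
Definition cons_p (e : Ed) (p : nat -> option Ed) (n : nat) := if n is n'.+1 then p n' else Some e.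
Lemma consP (e : Ed) (x : pt) : pu x 0 = r e -> Pok (cons_u (s e) (pu x)) (cons_p e (pp x)).
Proof. move=> H [|n] /=; [by split | exact: (pP x n)]. Qed.

Definition pcons (e : Ed) (x : pt) : pt :=
  match excluded_middle_informative (pu x 0 = r e) with
  | left H => @Pt (cons_u (s e) (pu x)) (cons_p e (pp x)) (pz x + 1) (consP H)
  | right _ => x end.
Lemma pcons_u e x : pu x 0 = r e -> pu (pcons e x) = cons_u (s e) (pu x).
Proof. by rewrite /pcons; case: excluded_middle_informative. Qed.
Lemma pcons_p e x : pu x 0 = r e -> pp (pcons e x) = cons_p e (pp x).
Proof. by rewrite /pcons; case: excluded_middle_informative. Qed.
Lemma pcons_z e x : pu x 0 = r e -> pz (pcons e x) = pz x + 1.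
Proof. by rewrite /pcons; case: excluded_middle_informative. Qed.

Lemma tail_cons e x : pu x 0 = r e -> tail (pcons e x) = x.
Proof.
move=> H; apply: pt_eq => [n|n|] /=; rewrite ?pcons_u ?pcons_p ?pcons_z //.
by rewrite addrK.
Qed.

Lemma pP0 x e : pp x 0 = Some e -> s e = pu x 0 /\ r e = pu x 1.
Proof. by move=> H; have := pP x 0; rewrite H. Qed.

Lemma cons_tail e x : pp x 0 = Some e -> pcons e (tail x) = x.
Proof.
move=> H; have [H1 H2] := pP0 H.
have H3 : pu (tail x) 0 = r e by [].
apply: pt_eq => [[|n]|[|n]|] /=; rewrite ?pcons_u ?pcons_p ?pcons_z //=.
by rewrite subrK.
Qed.

Definition op := (pt -> K) -> pt -> K.
Definition sgen (g : gen V Ed) : op := match g with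
 | GV v => fun phi x => ind (pu x 0 = v) * phi x
 | GE e => fun phi x => ind (pp x 0 = Some e) * phi (tail x)
 | GS e => fun phi x => ind (pu x 0 = r e) * phi (pcons e x) end.
Fixpoint sem (t : T) : op := match t with
 | TGen g => sgen g
 | TZero => fun _ _ => 0
 | TAdd a b => fun phi x => sem a phi x + sem b phi x
 | TScale k a => fun phi x => k * sem a phi x
 | TMul a b => fun phi => sem a (sem b phi) end.

Ltac funext := apply: functional_extensionality => ?.

Lemma sem_lin (t : T) :
  (forall phi psi, sem t (fun y => phi y + psi y) = fun x => sem t phi x + sem t psi x) /\
  (forall k phi, sem t (fun y => k * phi y) = fun x => k * sem t phi x).
Proof.
elim: t => [g||a [Ha1 Ha2] b [Hb1 Hb2]|k a [Ha1 Ha2]|a [Ha1 Ha2] b [Hb1 Hb2]] /=.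
- by case: g => [v|e|e] /=; split => *; funext; ring.
- by split => *; funext; ring.
- by split => *; rewrite ?Ha1 ?Hb1 ?Ha2 ?Hb2; funext; ring.
- by split => *; rewrite ?Ha1 ?Ha2; funext; ring.
- by split => *; rewrite ?Hb1 ?Ha1 ?Hb2 ?Ha2.
Qed.

Lemma sem_tsum (l : seq T) phi x : sem (tsum l) phi x = \sum_(t <- l) sem t phi x.
Proof. elim: l => [|a l IH] /=; by rewrite ?big_nil ?big_cons ?IH. Qed.

Lemma sum_ind_out (l : seq Ed) f c : ~ List.In f l ->
  \sum_(e <- l) ind (e = f) * c = 0.
Proof.
elim: l => [|a l IH] /= Hn; rewrite ?big_nil // big_cons.
rewrite ind_F; last by move=> E; apply: Hn; left.
rewrite mul0r add0r IH //; move=> H; apply: Hn; by right.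
Qed.

Lemma sum_ind_in (l : seq Ed) f c : List.NoDup l -> List.In f l ->
  \sum_(e <- l) ind (e = f) * c = c.
Proof.
elim: l => [|a l IH] //= /List.NoDup_cons_iff [Ha Hnd] Hin; rewrite big_cons.
case: (classic (a = f)) => [E|E].
- subst; rewrite ind_T // mul1r sum_ind_out ?addr0 //.
- rewrite ind_F // mul0r add0r IH //; by case: Hin.
Qed.


Ltac z0 := rewrite ?mul0r ?mulr0 ?mul0r ?mulr0 ?add0r ?addr0.
Ltac cl P := let H := fresh "H" in destruct (classic P) as [H|H]; [rewrite (@ind_T P H) | rewrite (@ind_F P H)].

Lemma rel_sound a b : leavitt_rel s r a b -> sem a = sem b.
Proof.
case => [v|v w Hvw|e|e|e|e|e|e f Hef|v l Hl Hnd Hiff] /=; apply: functional_extensionality => phi; apply: functional_extensionality => x.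
- by rewrite mulrA ind_idem.
- cl (pu x 0 = v); z0 => //; subst.
  by rewrite ind_F // mul0r mulr0.
- cl (pp x 0 = Some e); z0 => //.
  have [H1 _] := pP0 H. by rewrite ind_T // mul1r.
- cl (pp x 0 = Some e); z0 => //.
  have [_ H1] := pP0 H. by rewrite ind_T // mul1r.
- by rewrite mulrA ind_idem.
- cl (pu x 0 = r e); z0 => //.
  by rewrite ind_T ?mul1r // pcons_u.
- cl (pu x 0 = r e); z0 => //.
  rewrite pcons_p // ind_T //= mul1r tail_cons //.
- cl (pu x 0 = r e); z0 => //.
  rewrite pcons_p // ind_F ?mul0r ?mulr0 //= => [[E]]; exact: Hef.
- rewrite lmap_map sem_tsum big_map /=.
  case E: (pp x 0) => [f|].
  + have [H1 H2] := pP0 E.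
    have -> : \sum_(j <- l) ind (Some f = Some j) * (ind (pu x 1 = r j) * phi (pcons j (tail x)))
       = \sum_(j <- l) ind (j = f) * phi x.
      apply: eq_bigr => j _; cl (j = f).
      * subst; rewrite ind_T // ind_T //= mul1r cons_tail //.
      * rewrite ind_F ?mul0r // => [[?]]; subst; exact: H.
    cl (pu x 0 = v).
    * rewrite mul1r sum_ind_in //; apply/Hiff; by rewrite H1.
    * rewrite mul0r sum_ind_out // => /Hiff Hs; apply: H; by rewrite -H1.
  + rewrite big1 ?mulr0.
    * rewrite ind_F ?mul0r // => Hv.
      case: l Hl Hnd Hiff => [//|e l] _ _ Hiff.
      have := pP x 0; rewrite E => /(_ e) H'; apply: H'; rewrite Hv; apply/Hiff; by left.
    * by move=> j _; rewrite ind_F ?mul0r.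
Qed.

Lemma sound a b : a === b -> sem a = sem b.
Proof.
elim => {a b} /=.
- exact: rel_sound.
- by [].
- by [].
- by move=> a b c _ -> _ ->.
- by move=> a a' b b' _ -> _ ->.
- by move=> k a a' _ ->.
- by move=> a a' b b' _ -> _ ->.
- by move=> a b c; funext; funext; ring.
- by move=> a b; funext; funext; ring.
- by move=> a; funext; funext; ring.
- by move=> a; funext; funext; ring.
- by move=> k a b; funext; funext; ring.
- by move=> k l a; funext; funext; ring.
- by move=> k l a; funext; funext; ring.
- by move=> a; funext; funext; ring.
- by [].
- by move=> a b c; funext; funext.
- by move=> a b c; funext; rewrite (proj1 (sem_lin a)).
- by move=> k a b; funext; funext.
- by move=> k a b; funext; rewrite (proj2 (sem_lin a)).
Qed.


Definition nxt (v : V) : option Ed :=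
  match excluded_middle_informative (exists e, s e = v) with
  | left H => Some (proj1_sig (constructive_indefinite_description _ H))
  | right _ => None end.
Lemma nxtP v : match nxt v with Some e => s e = v | None => forall e, s e <> v end.
Proof.
rewrite /nxt; case: excluded_middle_informative => [H|H]; first exact: (proj2_sig (constructive_indefinite_description _ H)).
move=> e He; apply: H; by exists e.
Qed.
Fixpoint bu (w : V) (n : nat) : V :=
  if n is n'.+1 then (if nxt (bu w n') is Some e then r e else bu w n') else w.
Definition bp w n := nxt (bu w n).
Lemma bP w : Pok (bu w) (bp w).
Proof. move=> n; rewrite /bp /=; have := nxtP (bu w n); by case: (nxt (bu w n)). Qed.
Definition base (w : V) : pt := @Pt (bu w) (bp w) 0 (bP w).
Lemma base_u0 w : pu (base w) 0 = w. Proof. by []. Qed.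

Lemma in_In (A : eqType) (B : Type) (f : A -> B) (l : seq A) a : a \in l -> List.In (f a) (List.map f l).
Proof. elim: l => [|b l IH] //=; rewrite in_cons => /orP [/eqP ->|H]; [by left|right; exact: IH]. Qed.

Lemma dir1 (cj : {rmorphism K -> K}) (v0 : V) :
  lpa_pos_def s r cj -> field_pos_def cj.
Proof.
move=> Hpos ks Hks k Hk.
pose xs := List.map (fun k => TScale k (v_ v0)) ks.
have Hsum : tsum (List.map (fun x => TMul x (tstar cj x)) xs) === TScale (\sum_(k <- ks) k * cj k) (v_ v0).
  rewrite /xs; elim: (ks) => [|a l IH] /=; first by rewrite big_nil scale0.
  rewrite big_cons IH Q_scaleDl Q_scalel Q_scaler -Q_scaleA.
  by rewrite (Q_rel (@LR_vv K V Ed s r v0)).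
have Hx : TScale k (v_ v0) === TZero.
  apply: (Hpos xs); last exact: (in_In (fun k => TScale k (v_ v0)) Hk).
  by rewrite Hsum Hks scale0.
move: Hx => /sound /(congr1 (fun f => f (fun _ => 1) (base v0))) /=.
by rewrite ind_T // !mulr1.
Qed.


Section Star.
Variable cj : {rmorphism K -> K}.

Lemma tstar_tsum (l : seq T) : tstar cj (tsum l) = tsum (map (tstar cj) l).
Proof. by elim: l => //= a l ->. Qed.

Lemma tstarK : (forall k, cj (cj k) = k) -> forall t : T, tstar cj (tstar cj t) = t.
Proof.
move=> Hi; elim => [[v|e|e]||a IHa b IHb|k a IHa|a IHa b IHb] //=; by rewrite ?IHa ?IHb ?Hi.
Qed.

Lemma star_rel a b : leavitt_rel s r a b -> tstar cj a === tstar cj b.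
Proof.
case => [v|v w Hvw|e|e|e|e|e|e f Hef|v l Hl Hnd Hiff] /=.
- apply: Q_rel; constructor.
- apply: Q_rel; apply: LR_vw => E; exact: Hvw (esym E).
- apply: Q_rel; constructor.
- apply: Q_rel; constructor.
- apply: Q_rel; constructor.
- apply: Q_rel; constructor.
- apply: Q_rel; constructor.
- apply: Q_rel; apply: LR_CK1' => E; exact: Hef (esym E).
- rewrite tstar_tsum lmap_map -map_comp.
  have -> : (tstar cj \o (fun e : Ed => TMul (e_ e) (es_ e))) = (fun e => TMul (e_ e) (es_ e)) by [].
  rewrite -lmap_map; apply: Q_rel; exact: LR_CK2 Hl Hnd Hiff.
Qed.

Lemma star_resp a b : a === b -> tstar cj a === tstar cj b.
Proof.
elim => {a b} /=.
- exact: star_rel.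
- by [].
- by move=> *; apply: Q_sym.
- by move=> a b c _ H1 _ H2; apply: Q_trans H1 H2.
- by move=> a a' b b' _ H1 _ H2; apply: Q_add.
- by move=> k a a' _ H; apply: Q_scale.
- by move=> a a' b b' _ H1 _ H2; apply: Q_mul.
- by move=> *; apply: Q_addA.
- by move=> *; apply: Q_addC.
- by move=> *; apply: Q_add0.
- by move=> a; rewrite rmorphN1; apply: Q_addN.
- by move=> *; apply: Q_scaleDr.
- by move=> k l a; rewrite rmorphD; apply: Q_scaleDl.
- by move=> k l a; rewrite rmorphM; apply: Q_scaleA.
- by move=> a; rewrite rmorph1; apply: Q_scale1.
- by move=> *; apply: Q_sym; apply: Q_mulA.
- by move=> *; apply: Q_mulDr.
- by move=> *; apply: Q_mulDl.
- by move=> *; apply: Q_scaler.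
- by move=> *; apply: Q_scalel.
Qed.
End Star.


Fixpoint pathT (w : V) (a : seq Ed) : T := if a is e :: a' then TMul (e_ e) (pathT w a') else v_ w.
Fixpoint ghostT (w : V) (b : seq Ed) : T := if b is e :: b' then TMul (ghostT w b') (es_ e) else v_ w.
Definition mono w a b := TMul (pathT w a) (ghostT w b).
Definition hdv (a : seq Ed) (w : V) := if a is e :: _ then s e else w.
Fixpoint vpath (a : seq Ed) (w : V) : Prop := if a is e :: a' then r e = hdv a' w /\ vpath a' w else True.
Record ent := Ent { ec : K; ew : V; ea : seq Ed; eb : seq Ed }.
Definition etm (x : ent) : T := TScale (ec x) (mono (ew x) (ea x) (eb x)).
Definition okent (x : ent) := vpath (ea x) (ew x) /\ vpath (eb x) (ew x).
Definition tsumL (L : seq ent) := tsum (map etm L).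
Definition allok (L : seq ent) := forall y, List.In y L -> okent y.
Definition scent (k : K) (x : ent) := Ent (k * ec x) (ew x) (ea x) (eb x).

Lemma allok_cat L1 L2 : allok L1 -> allok L2 -> allok (L1 ++ L2).
Proof. move=> H1 H2 y Hy; case: (List.in_app_or _ _ _ Hy) => ?; [exact: H1|exact: H2]. Qed.
Lemma allok_scale k L : allok L -> allok (map (scent k) L).
Proof. move=> H y; rewrite -lmap_map => Hy; case: (proj1 (List.in_map_iff _ _ _) Hy) => [x [<- Hx]]; exact: (H x Hx). Qed.

Lemma tsumL_cat L1 L2 : tsumL (L1 ++ L2) === TAdd (tsumL L1) (tsumL L2).
Proof. by rewrite /tsumL map_cat tsum_cat. Qed.
Lemma tsumL_scale k L : TScale k (tsumL L) === tsumL (map (scent k) L).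
Proof.
elim: L => [|x L IH] /=; first exact: scaleZ.
by rewrite /tsumL /= Q_scaleDr -Q_scaleA -/(tsumL L) IH.
Qed.
Lemma tsumL1 w a b : tsumL [:: Ent 1 w a b] === mono w a b.
Proof. rewrite /tsumL /= taddr0 /etm /=. exact: Q_scale1. Qed.

Lemma span_map (A : Type) (f : A -> T) (l : seq A) :
  (forall x, List.In x l -> exists L, allok L /\ f x === tsumL L) ->
  exists L, allok L /\ tsum (map f l) === tsumL L.
Proof.
elim: l => [|a l IH] H /=; first by exists [::].
have [La [Ha Ea]] := H a (or_introl erefl).
have [Ll [Hl El]] := IH (fun x Hx => H x (or_intror Hx)).
exists (La ++ Ll); split; first exact: allok_cat.
by rewrite tsumL_cat Ea El.
Qed.

Lemma Rvv v : TMul (v_ v) (v_ v) === v_ v. Proof. exact: Q_rel (@LR_vv K V Ed s r v). Qed.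
Lemma Rvw v w : v <> w -> TMul (v_ v) (v_ w) === TZero. Proof. move=> H; exact: Q_rel (@LR_vw K V Ed s r v w H). Qed.
Lemma Rse e : TMul (v_ (s e)) (e_ e) === e_ e. Proof. exact: Q_rel (@LR_se K V Ed s r e). Qed.
Lemma Rer e : TMul (e_ e) (v_ (r e)) === e_ e. Proof. exact: Q_rel (@LR_er K V Ed s r e). Qed.
Lemma Rre e : TMul (v_ (r e)) (es_ e) === es_ e. Proof. exact: Q_rel (@LR_re K V Ed s r e). Qed.
Lemma Res e : TMul (es_ e) (v_ (s e)) === es_ e. Proof. exact: Q_rel (@LR_es K V Ed s r e). Qed.
Lemma RCK1 e : TMul (es_ e) (e_ e) === v_ (r e). Proof. exact: Q_rel (@LR_CK1 K V Ed s r e). Qed.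
Lemma RCK1' e f : e <> f -> TMul (es_ e) (e_ f) === TZero. Proof. move=> H; exact: Q_rel (@LR_CK1' K V Ed s r e f H). Qed.

Lemma ve0 u e : u <> s e -> TMul (v_ u) (e_ e) === TZero.
Proof. by move=> H; rewrite -(Rse e) Q_mulA (Rvw H) tmul0l. Qed.
Lemma ev0 e w : r e <> w -> TMul (e_ e) (v_ w) === TZero.
Proof. by move=> H; rewrite -(Rer e) -Q_mulA (Rvw H) tmul0r. Qed.
Lemma ee0 f e : r f <> s e -> TMul (e_ f) (e_ e) === TZero.
Proof. by move=> H; rewrite -(Rer f) -Q_mulA (ve0 H) tmul0r. Qed.
Lemma sv0 f w : s f <> w -> TMul (es_ f) (v_ w) === TZero.
Proof. by move=> H; rewrite -(Res f) -Q_mulA (Rvw H) tmul0r. Qed.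

Lemma path_vl a w : vpath a w -> TMul (v_ (hdv a w)) (pathT w a) === pathT w a.
Proof. case: a => [|e a] /= => [_|_]; [exact: Rvv | by rewrite Q_mulA Rse]. Qed.
Lemma path_vr a w : TMul (pathT w a) (v_ w) === pathT w a.
Proof. elim: a => [|e a IH] /=; [exact: Rvv| by rewrite -Q_mulA IH]. Qed.
Lemma ghost_vl b w : TMul (v_ w) (ghostT w b) === ghostT w b.
Proof. elim: b => [|e b IH] /=; [exact: Rvv| by rewrite Q_mulA IH]. Qed.
Lemma ghost_rcons b w e : s e = w -> ghostT (r e) (rcons b e) === TMul (es_ e) (ghostT w b).
Proof.
move=> H; elim: b => [|e' b IH] /=; first by rewrite Rre -H Res.
by rewrite IH -Q_mulA.
Qed.
Lemma path_rcons a w e : s e = w -> pathT (r e) (rcons a e) === TMul (pathT w a) (e_ e).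
Proof.
move=> H; elim: a => [|e' a IH] /=; first by rewrite Rer -H Rse.
by rewrite IH Q_mulA.
Qed.
Lemma hdv_rcons a e : hdv (rcons a e) (r e) = hdv a (s e).
Proof. by case: a. Qed.
Lemma vpath_rcons a w e : vpath a w -> s e = w -> vpath (rcons a e) (r e).
Proof.
move=> + H; elim: a => [|e' a IH] /= => [_|[H1 H2]]; first by [].
split; last exact: IH. by rewrite hdv_rcons H.
Qed.

Lemma gen_mono g w a b : vpath a w -> vpath b w ->
  exists L, allok L /\ TMul (TGen K g) (mono w a b) === tsumL L.
Proof.
move=> Ha Hb; rewrite /mono.
case: g => [u|f|f]; case: a Ha => [|e a] /= Ha.
- case: (classic (u = w)) => H.
  + subst; exists [:: Ent 1 w [::] b]; split; first by move=> y [<-|//].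
    by rewrite tsumL1 /mono /= Q_mulA Rvv.
  + exists [::]; split => //; by rewrite Q_mulA (Rvw H) tmul0l.
- case: (classic (u = s e)) => H.
  + subst; exists [:: Ent 1 w (e :: a) b]; split; first by move=> y [<-|//].
    by rewrite tsumL1 /mono /= !Q_mulA Rse.
  + exists [::]; split => //; by rewrite !Q_mulA (ve0 H) !tmul0l.
- case: (classic (r f = w)) => H.
  + exists [:: Ent 1 w [:: f] b]; split; first by move=> y [<-|//]; split.
    by rewrite tsumL1 /mono /= Q_mulA.
  + exists [::]; split => //; by rewrite Q_mulA (ev0 H) tmul0l.
- case: (classic (r f = s e)) => H.
  + exists [:: Ent 1 w [:: f, e & a] b]; split; first by move=> y [<-|//]; split.
    by rewrite tsumL1 /mono /= !Q_mulA.
  + exists [::]; split => //; by rewrite !Q_mulA (ee0 H) !tmul0l.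
- case: (classic (s f = w)) => H.
  + exists [:: Ent 1 (r f) [::] (rcons b f)]; split.
      move=> y [<-|//]; split => //; exact: (vpath_rcons Hb H).
    by rewrite tsumL1 /mono /= ghost_vl (ghost_rcons _ H) Q_mulA Rre.
  + exists [::]; split => //; by rewrite Q_mulA (sv0 H) tmul0l.
- case: (classic (f = e)) => H.
  + subst; exists [:: Ent 1 w a b]; split; first by move=> y [<-|//]; split; [case: Ha|].
    rewrite tsumL1 /mono /= !Q_mulA RCK1. case: Ha => -> Ha'. by rewrite path_vl.
  + exists [::]; split => //; by rewrite !Q_mulA (RCK1' H) !tmul0l.
Qed.

Lemma span_mul (t : T) : forall L, allok L -> exists L', allok L' /\ TMul t (tsumL L) === tsumL L'.
Proof.
elim: t => [g||a IHa b IHb|k a IHa|a IHa b IHb] L HL.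
- have [L' [H' E']] : exists L', allok L' /\ tsum (map (fun x => TMul (TGen K g) (etm x)) L) === tsumL L'.
    apply: span_map => x Hx.
    have [Hxa Hxb] := HL x Hx.
    have [Lg [Hg Eg]] := gen_mono g Hxa Hxb.
    exists (map (scent (ec x)) Lg); split; first exact: allok_scale.
    by rewrite /= /etm Q_scaler Eg tsumL_scale.
  exists L'; split => //; rewrite /tsumL tsum_mulr -map_comp; exact: E'.
- by exists [::]; split => //; rewrite tmul0l.
- have [La [Ha Ea]] := IHa L HL; have [Lb [Hb Eb]] := IHb L HL.
  exists (La ++ Lb); split; first exact: allok_cat.
  by rewrite Q_mulDl Ea Eb tsumL_cat.
- have [La [Ha Ea]] := IHa L HL.
  exists (map (scent k) La); split; first exact: allok_scale.
  by rewrite Q_scalel Ea tsumL_scale.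
- have [Lb [Hb Eb]] := IHb L HL; have [La [Ha Ea]] := IHa Lb Hb.
  exists La; split => //. by rewrite -Q_mulA Eb Ea.
Qed.

Lemma span (t : T) : exists L, allok L /\ t === tsumL L.
Proof.
elim: t => [g||a IHa b IHb|k a IHa|a IHa b IHb].
- case: g => [v|e|e].
  + exists [:: Ent 1 v [::] [::]]; split; first by move=> y [<-|//].
    by rewrite tsumL1 /mono /= Rvv.
  + exists [:: Ent 1 (r e) [:: e] [::]]; split; first by move=> y [<-|//].
    by rewrite tsumL1 /mono /= !Rer.
  + exists [:: Ent 1 (r e) [::] [:: e]]; split; first by move=> y [<-|//].
    by rewrite tsumL1 /mono /= Rre Rre.
- by exists [::].
- have [La [Ha Ea]] := IHa; have [Lb [Hb Eb]] := IHb.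
  exists (La ++ Lb); split; first exact: allok_cat.
  by rewrite Ea Eb tsumL_cat.
- have [La [Ha Ea]] := IHa.
  exists (map (scent k) La); split; first exact: allok_scale.
  by rewrite Ea tsumL_scale.
- have [Lb [Hb Eb]] := IHb; have [L' [H' E']] := span_mul a Hb.
  exists L'; split => //. by rewrite Eb E'.
Qed.

Definition regular (w : V) := exists l : seq Ed, l <> [::] /\ List.NoDup l /\ forall e, s e = w <-> List.In e l.
Definition good (N : nat) (x : ent) :=
  okent x /\ (size (ea x) <= N)%N /\ ((size (ea x) < N)%N -> ~ regular (ew x)).

Lemma span_mapG (P : ent -> Prop) (A : Type) (f : A -> T) (l : seq A) :
  (forall x, List.In x l -> exists L, (forall y, List.In y L -> P y) /\ f x === tsumL L) ->
  exists L, (forall y, List.In y L -> P y) /\ tsum (map f l) === tsumL L.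
Proof.
elim: l => [|a l IH] H /=; first by exists [::].
have [La [Ha Ea]] := H a (or_introl erefl).
have [Ll [Hl El]] := IH (fun x Hx => H x (or_intror Hx)).
exists (La ++ Ll); split.
  move=> y Hy; case: (List.in_app_or _ _ _ Hy) => ?; [exact: Ha|exact: Hl].
by rewrite tsumL_cat Ea El.
Qed.

Lemma tsum_map_eq (A : Type) (f g : A -> T) (l : seq A) :
  (forall x, List.In x l -> f x === g x) -> tsum (map f l) === tsum (map g l).
Proof.
elim: l => [|a l IH] H //=.
rewrite (H a (or_introl erefl)) IH //; move=> x Hx; exact: H x (or_intror Hx).
Qed.

Lemma mono_CK2 w a b (l : seq Ed) : l <> [::] -> List.NoDup l -> (forall e, s e = w <-> List.In e l) ->
  mono w a b === tsum (map (fun e => mono (r e) (rcons a e) (rcons b e)) l).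
Proof.
move=> Hl Hnd Hiff.
rewrite /mono -{1}(path_vr a w) (Q_rel (@LR_CK2 K V Ed s r w l Hl Hnd Hiff)) lmap_map.
rewrite tsum_mulr tsum_mull -!map_comp; apply: tsum_map_eq => e He /=.
have Hs : s e = w by apply/Hiff.
by rewrite (path_rcons _ Hs) (ghost_rcons _ Hs) !Q_mulA.
Qed.

Lemma refine1 N d : forall x, okent x -> (size (ea x) <= N)%N -> (N - size (ea x))%N = d ->
  exists L, (forall y, List.In y L -> good N y) /\ etm x === tsumL L.
Proof.
elim: d => [|d IH] x Hx HN Hd.
- exists [:: x]; split; last by rewrite /tsumL /= taddr0.
  move=> y [<-|//]; split => //; split => // Hlt; exfalso; lia.
- case: (classic (regular (ew x))) => [[l [Hl [Hnd Hiff]]]|Hreg]; last first.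
    exists [:: x]; split; last by rewrite /tsumL /= taddr0.
    by move=> y [<-|//]; split.
  case: x Hx HN Hd Hiff => c w a b [Ha Hb] /= HN Hd Hiff.
  have [L [HL EL]] : exists L, (forall y, List.In y L -> good N y) /\
      tsum (map (fun e => TScale c (mono (r e) (rcons a e) (rcons b e))) l) === tsumL L.
    apply: span_mapG => e He /=.
    have Hs : s e = w by apply/Hiff.
    apply: (IH (Ent c (r e) (rcons a e) (rcons b e))) => /=.
    + split; [exact: vpath_rcons Ha Hs | exact: vpath_rcons Hb Hs].
    + rewrite size_rcons; lia.
    + rewrite size_rcons; lia.
  exists L; split => //.
  rewrite /etm /= (mono_CK2 a b Hl Hnd Hiff) tsum_scale -map_comp; exact: EL.
Qed.


Fixpoint shift (n : nat) (x : pt) : pt := if n is n'.+1 then shift n' (tail x) else x.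
Fixpoint pre (w : V) (a : seq Ed) (x : pt) : Prop :=
  if a is e :: a' then pp x 0 = Some e /\ pre w a' (tail x) else pu x 0 = w.
Fixpoint app (b : seq Ed) (x : pt) : pt := if b is e :: b' then pcons e (app b' x) else x.

Lemma sem_path w a phi x : sem (pathT w a) phi x = ind (pre w a x) * phi (shift (size a) x).
Proof. elim: a x => [|e a IH] x //=. by rewrite IH ind_and mulrA. Qed.

Lemma app_u0 b w x : vpath b w -> pu x 0 = w -> pu (app b x) 0 = hdv b w.
Proof.
elim: b => [|e b IH] //= [H1 H2] Hx.
have H3 : pu (app b x) 0 = r e by rewrite IH.
by rewrite pcons_u.
Qed.

Lemma sem_ghost w b phi x : vpath b w -> sem (ghostT w b) phi x = ind (pu x 0 = w) * phi (app b x).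
Proof.
elim: b phi => [|e b IH] phi //= [H1 H2].
rewrite IH //; cl (pu x 0 = w); z0 => //.
by rewrite (@ind_T (pu (app b x) 0 = r e)) ?mul1r // (app_u0 H2 H).
Qed.

Lemma pre_end w a x : pre w a x -> pu (shift (size a) x) 0 = w.
Proof. elim: a x => [|e a IH] x //= [_ H]; exact: IH. Qed.

Lemma sem_mono w a b phi x : vpath b w ->
  sem (mono w a b) phi x = ind (pre w a x) * phi (app b (shift (size a) x)).
Proof.
move=> Hb; rewrite /mono /= sem_path sem_ghost //.
cl (pre w a x); z0 => //. by rewrite (@ind_T (pu (shift (size a) x) 0 = w)) ?mul1r // (pre_end H).
Qed.

Lemma pre_app a w y : vpath a w -> pu y 0 = w -> pre w a (app a y) /\ shift (size a) (app a y) = y.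
Proof.
elim: a => [|e a IH] //= [H1 H2] Hy.
have H3 : pu (app a y) 0 = r e by rewrite (app_u0 H2 Hy).
have [IH1 IH2] := IH H2 Hy.
by rewrite pcons_p // tail_cons.
Qed.

Lemma app_pre a w q : vpath a w -> pre w a q -> q = app a (shift (size a) q).
Proof.
elim: a q => [|e a IH] q //= [H1 H2] [H3 H4].
by rewrite -(IH _ H2 H4) cons_tail.
Qed.

Lemma claim a b w q xi : vpath a w -> vpath b w -> pre w b q -> app a (shift (size b) q) = xi ->
  pre w a xi /\ app b (shift (size a) xi) = q.
Proof.
move=> Ha Hb Hq Hxi.
have Hy := pre_end Hq.
have [P1 P2] := pre_app Ha Hy.
rewrite -Hxi; split => //; rewrite P2; exact: esym (app_pre Hb Hq).
Qed.

Lemma app_z b w y : vpath b w -> pu y 0 = w -> pz (app b y) = pz y + (size b)%:Z.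
Proof.
elim: b => [|e b IH] /= => [_ _|[H1 H2] Hy]; first by rewrite addr0.
have H3 : pu (app b y) 0 = r e by rewrite (app_u0 H2 Hy).
rewrite pcons_z // IH // -addrA; congr (_ + _). by rewrite -add1n PoszD addrC.
Qed.

Lemma app_inj b b' w y : vpath b w -> vpath b' w -> pu y 0 = w -> app b y = app b' y -> b = b'.
Proof.
move=> Hb Hb' Hy E.
have Hs : size b = size b'.
  have := congr1 pz E; rewrite (app_z Hb Hy) (app_z Hb' Hy) => /addrI; by case.
elim: b b' Hb Hb' Hs E => [|e b IH] [|e' b'] //= [H1 H2] [H1' H2'] [Hs] E.
have H3 : pu (app b y) 0 = r e by rewrite (app_u0 H2 Hy).
have H3' : pu (app b' y) 0 = r e' by rewrite (app_u0 H2' Hy).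
have Ee : e = e'.
  have := congr1 (fun x => pp x 0) E; rewrite /= pcons_p // pcons_p //=; by case.
subst e'; congr (_ :: _); apply: IH => //.
by have := congr1 tail E; rewrite !tail_cons.
Qed.

Lemma pre_split a0 w0 y : vpath a0 w0 -> pu y 0 = w0 -> forall a' w', pre w' a' (app a0 y) ->
  (size a0 <= size a')%N -> exists g, a' = a0 ++ g /\ pre w' g y.
Proof.
elim: a0 => [|e a0 IH] /= => [_ Hy a' w' H _|[H1 H2] Hy [|e' a'] w'] //; first by exists a'.
have H3 : pu (app a0 y) 0 = r e by rewrite (app_u0 H2 Hy).
rewrite /= pcons_p // tail_cons //= => [[[<-] Hp]] Hs.
have [g [-> Hg]] := IH H2 Hy a' w' Hp Hs. by exists g.
Qed.


Definition delta (xi : pt) : pt -> K := fun p => ind (p = xi).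
Definition trip (x : ent) := (ew x, ea x, eb x).

Lemma big_eq_In (A : Type) (L : seq A) (F G : A -> K) :
  (forall y, List.In y L -> F y = G y) -> \sum_(y <- L) F y = \sum_(y <- L) G y.
Proof.
elim: L => [|a L IH] H; rewrite ?big_nil // !big_cons H ?IH //; [by move=> y Hy; apply: H; right|by left].
Qed.

Lemma sem_etm x phi q : okent x ->
  sem (etm x) phi q = ec x * (ind (pre (ew x) (ea x) q) * phi (app (eb x) (shift (size (ea x)) q))).
Proof. case: x => c w a b [_ Hb] /=; by rewrite -(sem_mono _ _ _ Hb). Qed.

Lemma sem_tsumL L phi q : allok L ->
  sem (tsumL L) phi q = \sum_(x <- L) ec x * (ind (pre (ew x) (ea x) q) * phi (app (eb x) (shift (size (ea x)) q))).
Proof.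
move=> HL; rewrite /tsumL sem_tsum big_map; apply: big_eq_In => y Hy.
exact: sem_etm (HL y Hy).
Qed.

Lemma exists_min (L : seq ent) : L <> [::] ->
  exists x0, List.In x0 L /\ forall y, List.In y L -> (size (ea x0) <= size (ea y))%N.
Proof.
elim: L => [//|a L IH] _; case: L IH => [|b L] IH.
  by exists a; split; [left|move=> y [<-|//]].
have [m [Hm Hmin]] := IH (fun H => ltac:(discriminate H)).
case: (leqP (size (ea a)) (size (ea m))) => Ha.
- exists a; split; first by left.
  move=> y [<-|Hy] //; exact: leq_trans Ha (Hmin y Hy).
- exists m; split; first by right.
  move=> y [<-|Hy]; [exact: ltnW | exact: Hmin].
Qed.

Fixpoint edgesAt (k : nat) (L : seq ent) : seq Ed :=
  if L is y :: L' then (if List.nth_error (ea y) k is Some e then e :: edgesAt k L' else edgesAt k L') else [::].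
Lemma edgesAtP k L y e : List.In y L -> List.nth_error (ea y) k = Some e -> List.In e (edgesAt k L).
Proof.
elim: L => [//|a L IH] [->|Hy] /=.
- by move=> ->; left.
- move=> H; case: (List.nth_error (ea a) k) => [f|]; [right|]; exact: IH.
Qed.

Lemma nth_error_cat (a0 g : seq Ed) e : List.nth_error (a0 ++ e :: g) (size a0) = Some e.
Proof. by elim: a0. Qed.

Lemma exists_nodup (E : seq Ed) (P : Ed -> Prop) :
  exists l, List.NoDup l /\ forall e, List.In e l <-> (List.In e E /\ P e).
Proof.
elim: E => [|a E [l [Hnd Hl]]].
  exists [::]; split; [constructor | by move=> e; split => // [[]]].
case: (classic (P a /\ ~ List.In a l)) => [[Pa Na]|H].
- exists (a :: l); split; first by constructor.
  move=> e; split.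
  + move=> [<-|He]; first by split; [left|].
    have [H1 H2] := proj1 (Hl e) He; split => //; by right.
  + move=> [[<-|He] Pe]; [by left| right; apply/Hl; by split].
- exists l; split => // e; split.
  + move=> He; have [H1 H2] := proj1 (Hl e) He; split => //; by right.
  + move=> [[<-|He] Pe]; last by apply/Hl.
    by apply: NNPP => Hn; apply: H; split.
Qed.

Lemma avoid w : ~ regular w -> (exists e, s e = w) -> forall E, exists e, s e = w /\ ~ List.In e E.
Proof.
move=> Hreg [e0 He0] E; apply: NNPP => Hn.
have HE : forall e, s e = w -> List.In e E.
  move=> e He; apply: NNPP => Hn'; apply: Hn; by exists e.
have [l [Hnd Hl]] := exists_nodup E (fun e => s e = w).
apply: Hreg; exists l; split; last split => //.
- move=> El; have := proj2 (Hl e0) (conj (HE e0 He0) He0); by rewrite El.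
- move=> e; split => [He|/Hl [] //]; apply/Hl; split => //; exact: HE.
Qed.

Lemma tsumL_split (P : pred ent) L : tsumL L === TAdd (tsumL (filter P L)) (tsumL (filter (predC P) L)).
Proof.
elim: L => [|a L IH] /=; first by rewrite Q_add0.
rewrite /tsumL /=; case: (P a) => /=; rewrite -/(tsumL L) IH -/(tsumL (filter P L)) -/(tsumL (filter (predC P) L)).
- by rewrite Q_addA.
- by rewrite Q_addA (Q_addC _ _ (etm a)) -Q_addA.
Qed.

Lemma tsumL_same x0 L : (forall y, List.In y L -> trip y = trip x0) ->
  tsumL L === TScale (\sum_(y <- L) ec y) (mono (ew x0) (ea x0) (eb x0)).
Proof.
elim: L => [|a L IH] H /=; first by rewrite big_nil scale0.
rewrite big_cons /tsumL /= -/(tsumL L) IH; last by move=> y Hy; apply: H; right.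
have := H a (or_introl erefl); rewrite /trip /etm; case=> -> -> ->.
by rewrite Q_scaleDl.
Qed.

Lemma In_filter (P : pred ent) L y : List.In y (filter P L) -> List.In y L.
Proof. elim: L => [//|a L IH] /=; case: (P a) => /= [[->|H]|H]; [by left|right; exact: IH|right; exact: IH]. Qed.

Lemma In_filterP (P : pred ent) L y : List.In y (filter P L) -> P y.
Proof.
elim: L => [//|a L IH] /=; case E: (P a) => /=.
- by move=> [<-|H] //; exact: IH.
- exact: IH.
Qed.

Lemma size_filterC (P : pred ent) L x0 : List.In x0 L -> P x0 -> (size (filter (predC P) L) < size L)%N.
Proof.
elim: L => [//|a L IH] /= [->|H] Px.
- rewrite Px /=; rewrite ltnS; exact: (leq_trans (size_filter _ _) (leqnn _)) || by rewrite size_filter count_size.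
- case: (P a) => /=; last by rewrite ltnS; exact: IH.
  by apply: leq_trans (IH H Px) _.
Qed.


Lemma key_eq N L x0 y0 : (forall y, List.In y L -> good N y) -> List.In x0 L ->
  (forall y, List.In y L -> (size (ea x0) <= size (ea y))%N) ->
  pu y0 0 = ew x0 ->
  (forall e', pp y0 0 = Some e' -> List.In e' (edgesAt (size (ea x0)) L) -> (size (ea x0) < N)%N -> False) ->
  forall y, List.In y L ->
  (pre (ew y) (ea y) (app (ea x0) y0) /\ app (eb y) (shift (size (ea y)) (app (ea x0) y0)) = app (eb x0) y0)
  <-> trip y = trip x0.
Proof.
move=> HL Hx0 Hmin Hy0 Hstop y Hy.
have [[Ha0 Hb0] [HN0 _]] := HL x0 Hx0.
have [[Ha Hb] [HN _]] := HL y Hy.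
have [P1 P2] := pre_app Ha0 Hy0.
split.
- move=> [Hpre Happ].
  have [g [Eg Hg]] := pre_split Ha0 Hy0 Hpre (Hmin y Hy).
  case: g Eg Hg => [|e' g] Eg Hg.
  + rewrite cats0 in Eg. move: Hg => /= Hw.
    have Ew : ew y = ew x0 by rewrite -Hw Hy0.
    rewrite Eg P2 in Happ.
    rewrite Ew in Hb.
    have Eb := app_inj Hb Hb0 Hy0 Happ.
    by rewrite /trip Ew Eg Eb.
  + exfalso; move: Hg => /= [Hp _].
    apply: (Hstop e' Hp).
    * apply: (edgesAtP Hy); rewrite Eg; exact: nth_error_cat.
    * apply: leq_trans HN; rewrite Eg size_cat /=; lia.
- rewrite /trip; case => Ew Ea Eb.
  rewrite Ew Ea Eb P2; by split.
Qed.

Lemma faith_core N : forall n L, (size L <= n)%N -> (forall y, List.In y L -> good N y) ->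
  (forall xi q, sem (tsumL L) (delta xi) q = 0) -> tsumL L === TZero.
Proof.
elim => [|n IH] L Hs HL H.
  by case: L Hs HL H.
case: (classic (L = [::])) => [->//|HnL].
have HLok : allok L by move=> y Hy; case: (HL y Hy).
have [x0 [Hx0 Hmin]] := exists_min HnL.
have [[Ha0 Hb0] [HN0 HR0]] := HL x0 Hx0.
pose E := edgesAt (size (ea x0)) L.
have [y0 [Hy0 Hstop]] : exists y0, pu y0 0 = ew x0 /\
   (forall e', pp y0 0 = Some e' -> List.In e' E -> (size (ea x0) < N)%N -> False).
  case: (classic ((size (ea x0) < N)%N /\ exists e, s e = ew x0)) => [[Hlt Hex]|Hc].
  - have [e [He HnE]] := avoid (HR0 Hlt) Hex E.
    have H1 : pu (base (r e)) 0 = r e by [].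
    exists (pcons e (base (r e))); split; first by rewrite pcons_u.
    by rewrite pcons_p //= => e' [<-].
  - exists (base (ew x0)); split => // e' He' _ Hlt; apply: Hc; split => //.
    exists e'; have := nxtP (ew x0); by rewrite /base /= /bp /= in He'; rewrite He'.
pose P : pred ent := fun y => dec (trip y = trip x0).
have Hsum : \sum_(y <- L) ec y * ind (trip y = trip x0) = 0.
  apply: etrans (H (app (eb x0) y0) (app (ea x0) y0)); rewrite sem_tsumL //.
  apply: big_eq_In => y Hy; congr (_ * _); rewrite -ind_and; apply: ind_iff.
  exact: iff_sym (key_eq HL Hx0 Hmin Hy0 Hstop Hy).
have E1 : tsumL (filter P L) === TZero.
  rewrite (@tsumL_same x0); last by move=> y /In_filterP /decP.
  have -> : \sum_(y <- filter P L) ec y = 0.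
    apply: (etrans _ Hsum); rewrite big_filter big_mkcond; apply: eq_bigr => y _.
    by rewrite /P /ind; case: decP; rewrite ?mulr1 ?mulr0.
  exact: scale0.
have E2 : tsumL L === tsumL (filter (predC P) L) by rewrite (tsumL_split P) E1 Q_add0.
rewrite E2; apply: IH.
- have := size_filterC Hx0 (_ : P x0); rewrite /P; case: decP => // _ /(_ isT) H'. lia.
- move=> y /In_filter Hy; exact: HL.
- by move=> xi q; rewrite -(sound E2).
Qed.


Fixpoint maxa (L : seq ent) : nat := if L is y :: L' then maxn (size (ea y)) (maxa L') else 0.
Lemma maxa_le L y : List.In y L -> (size (ea y) <= maxa L)%N.
Proof.
elim: L => [//|a L IH] /= [->|H]; first exact: leq_maxl.
exact: leq_trans (IH H) (leq_maxr _ _).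
Qed.

Lemma faithful (t : T) : (forall xi q, sem t (delta xi) q = 0) -> t === TZero.
Proof.
move=> H; have [L [HL EL]] := span t.
pose N := maxa L.
have [L' [HL' EL']] : exists L', (forall y, List.In y L' -> good N y) /\ tsum (map etm L) === tsumL L'.
  apply: span_mapG => x Hx.
  exact: (@refine1 N (N - size (ea x))%N x (HL x Hx) (maxa_le Hx) erefl).
have E : t === tsumL L' by rewrite EL; exact: EL'.
rewrite E; apply: (@faith_core N (size L')) => // xi q.
by rewrite -(sound E).
Qed.


Section Pos.
Variable cj : {rmorphism K -> K}.

Lemma cj_ind (P : Prop) : cj (ind P) = ind P.
Proof. by rewrite /ind; case: dec; rewrite ?rmorph1 ?rmorph0. Qed.

Lemma tstar_path w a : tstar cj (pathT w a) = ghostT w a.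
Proof. by elim: a => //= e a ->. Qed.
Lemma tstar_ghost w b : tstar cj (ghostT w b) = pathT w b.
Proof. by elim: b => //= e b ->. Qed.
Definition starent (x : ent) := Ent (cj (ec x)) (ew x) (eb x) (ea x).
Lemma tstar_tsumL L : tstar cj (tsumL L) = tsumL (map starent L).
Proof.
elim: L => [|x L IH] //=. rewrite /tsumL /= -/(tsumL L) IH.
by rewrite /etm /= /mono /= tstar_path tstar_ghost.
Qed.
Lemma allok_star L : allok L -> allok (map starent L).
Proof.
move=> H y; rewrite -lmap_map => Hy; case: (proj1 (List.in_map_iff _ _ _) Hy) => [x [<- Hx]].
by case: (H x Hx).
Qed.

Lemma group n : forall F : seq (K * pt), (size F <= n)%N -> exists ks : seq K,
  \sum_(p <- F) \sum_(p' <- F) p.1 * (cj p'.1 * ind (p'.2 = p.2)) = \sum_(k <- ks) k * cj k /\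
  ((forall k, k \in ks -> k = 0) -> forall q, \sum_(p <- F) p.1 * ind (p.2 = q) = 0).
Proof.
elim: n => [|n IH] F0 Hs.
  case: F0 Hs => // _.
  by exists [::]; split; [rewrite !big_nil | move=> _ q; rewrite big_nil].
case: F0 Hs => [|p0 F'] Hs.
  by exists [::]; split; [rewrite !big_nil | move=> _ q; rewrite big_nil].
set F := p0 :: F'.
pose P : pred (K * pt) := fun p => dec (p.2 = p0.2).
have Hsz : (size (filter (predC P) F) <= n)%N.
  rewrite /F /= /P; case: decP => //= _.
  move: Hs; rewrite /= ltnS; apply: leq_trans; rewrite size_filter; exact: count_size.
have [ksR [ER HR]] := IH (filter (predC P) F) Hsz.
have BR : forall f : K * pt -> K, \sum_(p <- filter (predC P) F) f p = \sum_(p <- F | ~~ P p) f p.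
  by move=> f; rewrite big_filter.
move: ER HR BR; set R := filter (predC P) F => ER HR BR.
clearbody R F.
pose G := \sum_(p <- F | P p) p.1.
have D1 : forall p, P p -> \sum_(p' <- F) p.1 * (cj p'.1 * ind (p'.2 = p.2)) = p.1 * cj G.
  move=> p /decP Pp; rewrite (bigID P) /= [X in _ + X]big1 ?addr0; last first.
    move=> p' /decP Hp'; rewrite ind_F ?mulr0 // => E; apply: Hp'; by rewrite E.
  rewrite /G rmorph_sum mulr_sumr; apply: eq_bigr => p' /decP Pp'.
  by rewrite ind_T ?mulr1 // Pp Pp'.
have D2 : forall p, ~~ P p -> \sum_(p' <- F) p.1 * (cj p'.1 * ind (p'.2 = p.2)) =
     \sum_(p' <- R) p.1 * (cj p'.1 * ind (p'.2 = p.2)).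
  move=> p /decP Pp; rewrite BR (bigID P) /= big1 ?add0r //.
  move=> p' /decP Hp'; rewrite ind_F ?mulr0 // => E; apply: Pp; by rewrite -E.
exists (G :: ksR); split.
  by rewrite (bigID P) /= (eq_bigr _ D1) -mulr_suml (eq_bigr _ D2) -BR big_cons ER.
move=> Hz q.
have G0 : G = 0 by apply: Hz; rewrite in_cons eqxx.
have HR0 : \sum_(p <- R) p.1 * ind (p.2 = q) = 0.
  apply: HR => k Hk; apply: Hz; by rewrite in_cons Hk orbT.
rewrite (bigID P) /= -BR HR0 addr0.
rewrite (eq_bigr (fun p => p.1 * ind (p0.2 = q))); first by rewrite -mulr_suml -/G G0 mul0r.
by move=> p /decP ->.
Qed.

Lemma pos_one (x : T) xi : exists ks : seq K,
  sem (TMul x (tstar cj x)) (delta xi) xi = \sum_(k <- ks) k * cj k /\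
  ((forall k, k \in ks -> k = 0) -> forall q, sem (tstar cj x) (delta xi) q = 0).
Proof.
have [L [HL EL]] := span x.
have ES : tstar cj x === tsumL (map starent L) by rewrite -tstar_tsumL; exact: star_resp EL.
have HLs := allok_star HL.
pose A y := pre (ew y) (ea y) xi.
pose Q y := app (eb y) (shift (size (ea y)) xi).
pose a y := ec y * ind (A y).
have Hstar : forall q, sem (tstar cj x) (delta xi) q = cj (\sum_(y <- L) a y * ind (Q y = q)).
  move=> q; rewrite (sound ES) sem_tsumL // big_map rmorph_sum; apply: big_eq_In => y Hy /=.
  have [Ha Hb] := HL y Hy.
  rewrite /a !rmorphM !cj_ind -mulrA; congr (_ * _); rewrite /delta -!ind_and; apply: ind_iff.
  split => [[H1 H2]|[H1 H2]]; [exact: claim Ha Hb H1 H2 | exact: claim Hb Ha H1 H2].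
have [ks [Eks Hks]] := @group _ (map (fun y => (a y, Q y)) L) (leqnn _).
exists ks; split.
- rewrite -Eks /= (sound EL) sem_tsumL // big_map; apply: big_eq_In => y Hy /=.
  rewrite Hstar big_map rmorph_sum mulrA mulr_sumr; apply: eq_bigr => y' _ /=.
  by rewrite rmorphM cj_ind.
- move=> Hz q; rewrite Hstar.
  have := Hks Hz q; rewrite big_map /= => ->; exact: rmorph0.
Qed.

Lemma pos_list (xs : seq T) xi : exists KS : seq K,
  \sum_(x <- xs) sem (TMul x (tstar cj x)) (delta xi) xi = \sum_(k <- KS) k * cj k /\
  ((forall k, k \in KS -> k = 0) -> forall x, List.In x xs -> forall q, sem (tstar cj x) (delta xi) q = 0).
Proof.
elim: xs => [|x xs [KS [E H]]].
  by exists [::]; split; rewrite ?big_nil.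
have [ks [Ek Hk]] := pos_one x xi.
exists (ks ++ KS); split; first by rewrite big_cons big_cat Ek E.
move=> Hz y [<-|Hy].
- apply: Hk => k Hk'; apply: Hz; by rewrite mem_cat Hk'.
- apply: H => // k Hk'; apply: Hz; by rewrite mem_cat Hk' orbT.
Qed.

Lemma dir2 : (forall k, cj (cj k) = k) -> field_pos_def cj -> lpa_pos_def s r cj.
Proof.
move=> Hi Hf xs Hxs x Hx.
have Hstar : tstar cj x === TZero.
  apply: faithful => xi q.
  have [KS [E1 E2]] := pos_list xs xi.
  apply: E2 => //; apply: Hf; rewrite -E1.
  have := congr1 (fun f => f (delta xi) xi) (sound Hxs).
  by rewrite /= sem_tsum lmap_map big_map.
rewrite -(tstarK Hi x); exact: star_resp Hstar.
Qed.

End Pos.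
End Main.

Unset Implicit Arguments.

Theorem mainTheorem11 (K : fieldType) (cj : {rmorphism K -> K})
  (V Ed : Type) (s r : Ed -> V) :
  is_involution cj -> inhabited V ->
  (lpa_pos_def (K:=K) s r cj <-> field_pos_def cj).
Proof.
move=> Hi [v0]; split.
- exact: (@dir1 K V Ed s r cj v0).
- exact: (@dir2 K V Ed s r cj Hi).
Qed.
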